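(* Let $A$ be an infinite discrete abelian group of uniform torsion, i.e. $dA=0$ for some integer $d\ge1$. Then $\mathcal{S}(\mathbf{R}\times A)$ is not path-connected.
   Context: $\mathcal{S}(G)$ denotes the space of closed subgroups of the locally compact group $G$ with the Chabauty topology (basic open sets $\{F: F\cap K=\emptyset,\ F\cap U_i\ne\emptyset\ \forall i\}$, $K$ compact, $U_i$ open). *)

(* Defs.v *)
From HB Require Import structures.
From mathcomp Require Import all_boot all_algebra.
From Stdlib Require Import Reals.
From Stdlib Require List.

Set Implicit Arguments.
Unset Strict Implicit.
Unset Printing Implicit Defensive.

Local Open Scope R_scope.

Section ChabautyDefs.
Variable A : zmodType.

Definition G : Type := (R * A)%type.

Definition gzero : G := (0, GRing.zero).
Definition gadd (g h : G) : G := (fst g + fst h, GRing.add (snd g) (snd h)).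
Definition gopp (g : G) : G := (- fst g, GRing.opp (snd g)).

(* Product topology of the usual topology on R and the discrete one on A. *)
Definition G_open (U : G -> Prop) : Prop :=
  forall x a, U (x, a) ->
    exists eps, 0 < eps /\ forall y, Rabs (y - x) < eps -> U (y, a).

Definition G_closed (F : G -> Prop) : Prop := G_open (fun g => ~ F g).

Definition G_compact (K : G -> Prop) : Prop :=
  forall (I : Type) (O : I -> G -> Prop),
    (forall i, G_open (O i)) ->
    (forall g, K g -> exists i, O i g) ->
    exists l : list I, forall g, K g -> exists i, List.In i l /\ O i g.

(* Closed subgroups of G: the points of S(G). *)
Definition closed_subgroup (F : G -> Prop) : Prop :=
  [/\ F gzero,
      (forall g h, F g -> F h -> F (gadd g h)),
      (forall g, F g -> F (gopp g)) &
      G_closed F].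

Definition chabauty_basic (K : G -> Prop) (Us : list (G -> Prop))
    (F : G -> Prop) : Prop :=
  (forall g, K g -> ~ F g) /\
  List.Forall (fun U => exists g, U g /\ F g) Us.

Definition chabauty_continuous_on01 (gamma : R -> G -> Prop) : Prop :=
  forall t, 0 <= t <= 1 ->
  forall (K : G -> Prop) (Us : list (G -> Prop)),
    G_compact K -> List.Forall G_open Us ->
    chabauty_basic K Us (gamma t) ->
    exists delta, 0 < delta /\
      forall s, 0 <= s <= 1 -> Rabs (s - t) < delta ->
        chabauty_basic K Us (gamma s).

Definition chabauty_path (F0 F1 : G -> Prop) : Prop :=
  exists gamma : R -> G -> Prop,
    (forall t, 0 <= t <= 1 -> closed_subgroup (gamma t)) /\
    (forall g, gamma 0 g <-> F0 g) /\
    (forall g, gamma 1 g <-> F1 g) /\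
    chabauty_continuous_on01 gamma.

Definition chabauty_path_connected : Prop :=
  forall F0 F1 : G -> Prop,
    closed_subgroup F0 -> closed_subgroup F1 -> chabauty_path F0 F1.

End ChabautyDefs.

Definition infinite_group (A : zmodType) : Prop :=
  forall s : seq A, exists a : A, a \notin s.

Definition uniform_torsion (A : zmodType) : Prop :=
  exists d : nat, leq 1 d /\ forall a : A, GRing.natmul a d = GRing.zero.

(* Main.v *)
Require Import Defs.
From HB Require Import structures.
From mathcomp Require Import all_boot all_algebra.
From Stdlib Require Import Reals Lra Lia ZArith Classical.
Set Implicit Arguments.
Unset Strict Implicit.
Local Open Scope R_scope.

Lemma Rabs_lt_iff (x e : R) : Rabs x < e <-> - e < x < e.
Proof.
split.
- intro H. destruct (Rabs_def2 _ _ H). lra.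
- intros [H1 H2]. apply Rabs_def1; lra.
Qed.

Lemma Rabs_le_iff (x e : R) : Rabs x <= e <-> - e <= x <= e.
Proof.
split.
- intro H. split.
  + pose proof (Rle_abs (- x)). rewrite Rabs_Ropp in H0. lra.
  + pose proof (Rle_abs x). lra.
- intros [H1 H2]. unfold Rabs. destruct (Rcase_abs x); lra.
Qed.

Lemma connected_lemma (a b : R) (P : R -> Prop) : a <= b ->
  (forall u, a <= u <= b -> exists del, 0 < del /\
     forall s, a <= s <= b -> Rabs (s - u) < del -> (P s <-> P u)) ->
  (P a <-> P b).
Proof.
intros Hab Hloc.
set (E := fun x => a <= x <= b /\ forall y, a <= y <= x -> (P y <-> P a)).
assert (HEa : E a).
{ split. lra. intros y Hy. replace y with a by lra. tauto. }
assert (Hb : bound E). { exists b. intros x [Hx _]. lra. }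
destruct (completeness E Hb (ex_intro _ a HEa)) as [m [Hub Hlub]].
assert (Ham : a <= m) by (apply Hub; exact HEa).
assert (Hmb : m <= b) by (apply Hlub; intros x [Hx _]; lra).
destruct (Hloc m (conj Ham Hmb)) as [del [Hdel Hm]].
assert (Hx : exists x, E x /\ m - del < x).
{ apply not_all_not_ex. intro Hn.
  assert (m <= m - del).
  { apply Hlub. intros x Ex. destruct (Rle_lt_dec x (m-del)) as [h|h].
    exact h. exfalso. exact (Hn x (conj Ex h)). }
  lra. }
destruct Hx as [x [[Hx1 Hx2] Hxm]].
assert (Hxlem : x <= m) by (apply Hub; split; assumption).
assert (HPm : P m <-> P a).
{ rewrite <- (Hx2 x ltac:(lra)). symmetry. apply Hm. lra.
  apply Rabs_lt_iff. lra. }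
assert (Hall : forall y, a <= y <= m -> (P y <-> P a)).
{ intros y Hy. destruct (Rle_lt_dec y x).
  - apply Hx2. lra.
  - rewrite <- HPm. apply Hm. lra. apply Rabs_lt_iff. lra. }
destruct (Rlt_or_le m b) as [Hlt|Hge].
- exfalso.
  set (m' := Rmin b (m + del/2)).
  assert (Hm'1 : m' <= b) by apply Rmin_l.
  assert (Hm'2 : m' <= m + del/2) by apply Rmin_r.
  assert (Hm'3 : m < m').
  { unfold m', Rmin. destruct (Rle_dec b (m + del / 2)); lra. }
  assert (E m').
  { split. lra. intros y Hy. destruct (Rle_lt_dec y m).
    - apply Hall. lra.
    - rewrite <- HPm. apply Hm. lra. apply Rabs_lt_iff. lra. }
  assert (m' <= m) by (apply Hub; assumption). lra.
- symmetry. apply Hall. lra.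
Qed.

Lemma floor_ex (x l : R) : 0 < l -> exists k : Z, IZR k * l <= x < IZR k * l + l.
Proof.
intro Hl. destruct (archimed (x / l)) as [H1 H2].
exists (up (x/l) - 1)%Z. rewrite minus_IZR.
set (q := x / l) in *.
assert (Hx : x = q * l) by (unfold q; field; lra).
assert (IZR (up q) - 1 <= q) by lra.
assert (q < IZR (up q) - 1 + 1) by lra.
split.
- rewrite Hx. apply Rmult_le_compat_r; lra.
- rewrite Hx. replace ((IZR (up q) - 1) * l + l) with ((IZR (up q) - 1 + 1) * l) by ring.
  apply Rmult_lt_compat_r; lra.
Qed.

Definition sseg (A : zmodType) (a : R) (b : R) (a0 : A) : G A -> Prop :=
  fun g => a <= fst g <= b /\ snd g = a0.
Definition oseg (A : zmodType) (a : R) (b : R) (a0 : A) : G A -> Prop :=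
  fun g => a < fst g < b /\ snd g = a0.

Lemma oseg_open (A : zmodType) (a b : R) (a0 : A) : G_open (oseg a b a0).
Proof.
intros x c [Hx Hc]. simpl in Hx, Hc.
exists (Rmin (x - a) (b - x)). split.
- unfold Rmin. destruct (Rle_dec (x - a) (b - x)); lra.
- intros y Hy. apply Rabs_lt_iff in Hy.
  pose proof (Rmin_l (x - a) (b - x)). pose proof (Rmin_r (x - a) (b - x)).
  split; simpl; [lra | exact Hc].
Qed.

Lemma empty_compact (A : zmodType) : G_compact (fun _ : G A => False).
Proof. intros I O _ _. exists nil. intros g []. Qed.

Lemma sseg_compact (A : zmodType) (a b : R) (a0 : A) : a <= b -> G_compact (sseg a b a0).
Proof.
intros Hab I O Hop Hcov.
set (P := fun x => exists l : list I, forall y, a <= y <= x ->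
            exists i, List.In i l /\ O i (y, a0)).
assert (HPb : P b).
{ refine (proj1 (connected_lemma (P:=P) Hab _) _).
  - intros u Hu.
    destruct (Hcov (u, a0)) as [i Hi]. { split; simpl; [lra | reflexivity]. }
    destruct (Hop i u a0 Hi) as [eps [Heps Hball]].
    exists eps. split; [exact Heps|]. intros s Hs Hsu. apply Rabs_lt_iff in Hsu.
    split.
    + intros [l Hl]. exists (i :: l). intros y Hy. destruct (Rle_lt_dec y s).
      * destruct (Hl y) as [j [Hj1 Hj2]]; [lra|]. exists j. split; [right; exact Hj1 | exact Hj2].
      * exists i. split; [left; reflexivity|]. apply Hball. apply Rabs_lt_iff. lra.
    + intros [l Hl]. exists (i :: l). intros y Hy. destruct (Rle_lt_dec y u).
      * destruct (Hl y) as [j [Hj1 Hj2]]; [lra|]. exists j. split; [right; exact Hj1 | exact Hj2].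
      * exists i. split; [left; reflexivity|]. apply Hball. apply Rabs_lt_iff. lra.
  - destruct (Hcov (a, a0)) as [i Hi]. { split; simpl; [lra | reflexivity]. }
    exists (i :: nil). intros y Hy. replace y with a by lra. exists i. split; [left; reflexivity| exact Hi]. }
destruct HPb as [l Hl]. exists l. intros [y c] [Hy Hc]. simpl in Hy, Hc. subst c. apply Hl. exact Hy.
Qed.

Section Grp.
End Grp.

Lemma sub_natmul (A : zmodType) (H : G A -> Prop) : closed_subgroup H ->
  forall n x b, H (x, b) -> H (INR n * x, GRing.natmul b n).
Proof.
intros [H0 Hadd Hopp _] n x b Hxb. induction n as [|n IH].
- simpl. rewrite GRing.mulr0n. replace (0 * x) with 0 by ring. exact H0.
- rewrite S_INR GRing.mulrSr. replace ((INR n + 1) * x) with (INR n * x + x) by ring.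
  exact (Hadd _ _ IH Hxb).
Qed.

Lemma sub_intmul (A : zmodType) (H : G A -> Prop) : closed_subgroup H ->
  forall (k : Z) l, H (l, GRing.zero) -> H (IZR k * l, GRing.zero).
Proof.
intros HH k l Hl. pose proof HH as [H0 Hadd Hopp _].
destruct (Z_le_gt_dec 0 k) as [Hk|Hk].
- rewrite <- (Z2Nat.id k Hk). rewrite <- INR_IZR_INZ.
  pose proof (sub_natmul HH (Z.to_nat k) Hl). rewrite GRing.mul0rn in H1. exact H1.
- assert (Hk' : (0 <= - k)%Z) by lia.
  replace (IZR k) with (- IZR (- k)) by (rewrite opp_IZR; ring).
  rewrite <- (Z2Nat.id (- k) Hk'). rewrite <- INR_IZR_INZ.
  pose proof (sub_natmul HH (Z.to_nat (- k)) Hl). rewrite GRing.mul0rn in H1.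
  pose proof (Hopp _ H1). unfold gopp in H2. simpl in H2. rewrite GRing.oppr0 in H2.
  replace (- INR (Z.to_nat (- k)) * l) with (- (INR (Z.to_nat (- k)) * l)) by ring. exact H2.
Qed.

Lemma sub_reduce (A : zmodType) (H : G A -> Prop) : closed_subgroup H ->
  forall l x b, 0 < l -> H (l, GRing.zero) -> H (x, b) ->
  exists y, 0 <= y < l /\ H (y, b).
Proof.
intros HH l x b Hl HlH Hxb. pose proof HH as [H0 Hadd Hopp _].
destruct (floor_ex x Hl) as [k Hk].
exists (x - IZR k * l). split; [lra|].
pose proof (Hopp _ (sub_intmul HH k HlH)). unfold gopp in H1; simpl in H1.
pose proof (Hadd _ _ Hxb H1). unfold gadd in H2; simpl in H2.
rewrite GRing.oppr0 GRing.addr0 in H2. exact H2.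
Qed.

Definition Bset (A : zmodType) (H : G A -> Prop) (b : A) := exists x, H (x, b).
Definition fin (A : zmodType) (P : A -> Prop) := exists s : seq A, forall b, P b -> b \in s.

Lemma zero_fiber (A : zmodType) (H : G A -> Prop) (d : nat) (eta : R) :
  closed_subgroup H -> 1 <= INR d -> (forall a : A, GRing.natmul a d = GRing.zero) ->
  0 < eta -> (forall x, eta <= x <= 2 * INR d * eta -> ~ H (x, GRing.zero)) ->
  forall x b, H (x, b) -> Rabs x <= eta -> x = 0.
Proof.
intros HH Hd Htor Heta HV.
pose proof HH as [H0 Hadd Hopp _].
assert (Hpos : forall z, H (z, GRing.zero) -> 0 < z <= 2 * INR d * eta -> False).
{ intros z Hz Hzr. destruct (Rle_lt_dec eta z) as [h|h].
  - apply (HV z). lra. exact Hz.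
  - destruct (floor_ex eta (proj1 Hzr)) as [k Hk].
    pose proof (sub_intmul HH (k + 1)%Z Hz). rewrite plus_IZR in H1.
    apply (HV ((IZR k + 1) * z)); [|exact H1].
    assert (2 * eta <= 2 * INR d * eta) by nra. nra. }
assert (Hsmall : forall z, H (z, GRing.zero) -> Rabs z <= 2 * INR d * eta -> z = 0).
{ intros z Hz Hzr. apply Rabs_le_iff in Hzr.
  destruct (Rtotal_order z 0) as [h|[h|h]].
  - exfalso. apply (Hpos (- z)).
    + pose proof (Hopp _ Hz). unfold gopp in H1; simpl in H1. rewrite GRing.oppr0 in H1. exact H1.
    + lra.
  - exact h.
  - exfalso. apply (Hpos z Hz). lra. }
intros x b Hxb Hx.
pose proof (sub_natmul HH d Hxb). rewrite Htor in H1.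
assert (INR d * x = 0).
{ apply Hsmall. exact H1. rewrite Rabs_mult. rewrite (Rabs_right (INR d)); [|lra].
  pose proof (Rabs_pos x). nra. }
destruct (Rmult_integral _ _ H2) as [h|h]; [lra| exact h].
Qed.

Lemma fin_B_of_B0 (A : zmodType) (H : G A -> Prop) (d : nat) (eta : R) :
  closed_subgroup H -> 1 <= INR d -> (forall a : A, GRing.natmul a d = GRing.zero) ->
  0 < eta -> (forall x b, H (x, b) -> Rabs x <= eta -> x = 0) ->
  fin (fun b => H (0, b)) -> fin (Bset H).
Proof.
intros HH Hd Htor Heta HZ [s0 Hs0].
pose proof HH as [H0 Hadd Hopp _].
destruct (classic (exists l, 0 < l /\ H (l, GRing.zero))) as [[l [Hl HlH]]|Hno].
- assert (Hind : forall N : nat, exists s : seq A, forall y b, H (y, b) ->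
             0 <= y < INR N * eta -> b \in s).
  { intro N. induction N as [|N [s Hs]].
    - exists [::]. intros y b _ Hy. simpl in Hy. lra.
    - destruct (classic (exists y0 b0, H (y0, b0) /\ INR N * eta <= y0 < INR (S N) * eta))
        as [[y0 [b0 [Hyb0 Hy0]]]|Hn].
      + exists (s ++ map (GRing.add b0) s0). intros y b Hyb Hy.
        rewrite mem_cat. apply/orP.
        destruct (Rlt_le_dec y (INR N * eta)) as [h|h].
        * left. apply (Hs y b Hyb). lra.
        * right. rewrite S_INR in Hy, Hy0.
          pose proof (Hadd _ _ Hyb (Hopp _ Hyb0)). unfold gadd, gopp in H1; simpl in H1.
          assert (y + - y0 = 0).
          { apply (HZ _ _ H1). apply Rabs_le_iff. lra. }
          rewrite H2 in H1. pose proof (Hs0 _ H1).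
          replace b with (GRing.add b0 (GRing.add b (GRing.opp b0))).
          { apply/mapP. exists (GRing.add b (GRing.opp b0)); [exact H3|reflexivity]. }
          rewrite GRing.addrC. apply GRing.subrK.
      + exists s. intros y b Hyb Hy.
        destruct (Rlt_le_dec y (INR N * eta)) as [h|h].
        * apply (Hs y b Hyb). lra.
        * exfalso. apply Hn. exists y, b. split; [exact Hyb|lra]. }
  destruct (INR_unbounded (l / eta)) as [N HN].
  destruct (Hind N) as [s Hs]. exists s. intros b [x Hxb].
  destruct (sub_reduce HH Hl HlH Hxb) as [y [Hy Hyb]].
  apply (Hs y b Hyb). split; [lra|].
  assert (l = l / eta * eta) by (field; lra). nra.
- exists s0. intros b [x Hxb]. apply Hs0.
  pose proof (sub_natmul HH d Hxb). rewrite Htor in H1.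
  assert (INR d * x = 0).
  { destruct (Rtotal_order (INR d * x) 0) as [h|[h|h]].
    - exfalso. apply Hno. exists (- (INR d * x)). split; [lra|].
      pose proof (Hopp _ H1). unfold gopp in H2; simpl in H2. rewrite GRing.oppr0 in H2. exact H2.
    - exact h.
    - exfalso. apply Hno. exists (INR d * x). split; [lra| exact H1]. }
  destruct (Rmult_integral _ _ H2) as [h|h]; [lra|]. rewrite h in Hxb. exact Hxb.
Qed.

Definition Wp (A : zmodType) (H : G A -> Prop) := exists c, 0 < c < 1 /\ H (c, GRing.zero).
Definition Vp (A : zmodType) (d : nat) (eta : R) (H : G A -> Prop) :=
  forall x, eta <= x <= 2 * INR d * eta -> ~ H (x, GRing.zero).

Lemma basic_single (A : zmodType) (K U F : G A -> Prop) :
  chabauty_basic K [:: U] F <-> (forall g, K g -> ~ F g) /\ exists g, U g /\ F g.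
Proof.
split; intros [h1 h2]; split; try exact h1.
- inversion h2; assumption.
- constructor; [exact h2 | constructor].
Qed.

Lemma forall_open1 (A : zmodType) (U : G A -> Prop) : G_open U -> List.Forall (@G_open A) [:: U].
Proof. intro h. constructor; [exact h | constructor]. Qed.

Lemma const_on_ball (P : R -> Prop) t del : 0 < del -> 0 <= t <= 1 ->
 (forall u, 0 <= u <= 1 -> Rabs (u - t) < del -> exists d', 0 < d' /\
    forall s, 0 <= s <= 1 -> Rabs (s - u) < d' -> (P s <-> P u)) ->
 forall s, 0 <= s <= 1 -> Rabs (s - t) < del -> (P s <-> P t).
Proof.
intros Hdel Ht Hloc s Hs Hst. apply Rabs_lt_iff in Hst.
destruct (Rle_lt_dec s t) as [r|r].
- apply (connected_lemma (P:=P) r). intros u Hu.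
  destruct (Hloc u ltac:(lra) ltac:(apply Rabs_lt_iff; lra)) as [d' [Hd' Hd's]].
  exists d'. split; [exact Hd'|]. intros s' Hs' Hs'u. apply Hd's; [lra|exact Hs'u].
- symmetry. apply (connected_lemma (P:=P) (Rlt_le _ _ r)). intros u Hu.
  destruct (Hloc u ltac:(lra) ltac:(apply Rabs_lt_iff; lra)) as [d' [Hd' Hd's]].
  exists d'. split; [exact Hd'|]. intros s' Hs' Hs'u. apply Hd's; [lra|exact Hs'u].
Qed.

Lemma W_nbhd (A : zmodType) (gam : R -> G A -> Prop) t :
  chabauty_continuous_on01 gam -> 0 <= t <= 1 -> Wp (gam t) ->
  exists del, 0 < del /\ forall s, 0 <= s <= 1 -> Rabs (s - t) < del -> Wp (gam s).
Proof.
intros Hc Ht [c [Hc01 Hct]].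
destruct (Hc t Ht (fun _ => False) [:: oseg 0 1 GRing.zero] (@empty_compact A)
  (forall_open1 (@oseg_open A 0 1 GRing.zero))) as [del [Hdel Hs]].
{ apply basic_single. split; [intros g []|]. exists (c, GRing.zero). split; [split; simpl; [lra|reflexivity]|exact Hct]. }
exists del. split; [exact Hdel|]. intros s Hs1 Hs2.
destruct (proj1 (basic_single _ _ _) (Hs s Hs1 Hs2)) as [_ [[x a] [[Hx Ha] Hg]]].
simpl in Hx, Ha. subst a. exists x. split; assumption.
Qed.

Lemma V_nbhd (A : zmodType) (gam : R -> G A -> Prop) t d eta :
  chabauty_continuous_on01 gam -> 0 <= t <= 1 -> eta <= 2 * INR d * eta -> Vp d eta (gam t) ->
  exists del, 0 < del /\ forall s, 0 <= s <= 1 -> Rabs (s - t) < del -> Vp d eta (gam s).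
Proof.
intros Hc Ht Hle HV.
destruct (Hc t Ht (sseg eta (2 * INR d * eta) GRing.zero) [::] (@sseg_compact A _ _ GRing.zero Hle)
  (List.Forall_nil _)) as [del [Hdel Hs]].
{ split; [|constructor]. intros [x a] [Hx Ha] Hg. simpl in Hx, Ha. subst a. exact (HV x Hx Hg). }
exists del. split; [exact Hdel|]. intros s Hs1 Hs2.
destruct (Hs s Hs1 Hs2) as [HK _]. intros x Hx Hg. apply (HK (x, GRing.zero)); [split; simpl; [exact Hx|reflexivity]|exact Hg].
Qed.

Lemma W_const (A : zmodType) (gam : R -> G A -> Prop) u (b : A) :
  (forall t, 0 <= t <= 1 -> closed_subgroup (gam t)) ->
  chabauty_continuous_on01 gam -> 0 <= u <= 1 -> Wp (gam u) ->
  exists del, 0 < del /\ forall s, 0 <= s <= 1 -> Rabs (s - u) < del ->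
    (Bset (gam s) b <-> Bset (gam u) b).
Proof.
intros Hsub Hc Hu [c [Hc01 Hcu]].
destruct (classic (Bset (gam u) b)) as [[x Hx]|Hn].
- destruct (sub_reduce (Hsub u Hu) (proj1 Hc01) Hcu Hx) as [y [Hy Hyb]].
  destruct (Hc u Hu (fun _ => False) [:: oseg (-1) 1 b] (@empty_compact A)
    (forall_open1 (@oseg_open A (-1) 1 b))) as [del [Hdel Hs]].
  { apply basic_single. split; [intros g []|]. exists (y, b). split; [split; simpl; [lra|reflexivity]|exact Hyb]. }
  exists del. split; [exact Hdel|]. intros s Hs1 Hs2. split; intros _; [exists x; exact Hx|].
  destruct (proj1 (basic_single _ _ _) (Hs s Hs1 Hs2)) as [_ [[x' a] [[Hx' Ha] Hg]]].
  simpl in Hx', Ha. subst a. exists x'. exact Hg.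
- destruct (Hc u Hu (sseg (-1) 1 b) [:: oseg 0 1 GRing.zero] (@sseg_compact A (-1) 1 b ltac:(lra))
    (forall_open1 (@oseg_open A 0 1 GRing.zero))) as [del [Hdel Hs]].
  { apply basic_single. split.
    - intros [x a] [Hx Ha] Hg. simpl in Hx, Ha. subst a. apply Hn. exists x. exact Hg.
    - exists (c, GRing.zero). split; [split; simpl; [lra|reflexivity]|exact Hcu]. }
  exists del. split; [exact Hdel|]. intros s Hs1 Hs2.
  destruct (proj1 (basic_single _ _ _) (Hs s Hs1 Hs2)) as [HK [[c' a] [[Hc' Ha] Hg]]].
  simpl in Hc', Ha. subst a. split; [|intro h; contradiction].
  intros [x Hx]. exfalso.
  destruct (sub_reduce (Hsub s Hs1) (proj1 Hc') Hg Hx) as [y [Hy Hyb]].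
  apply (HK (y, b)); [split; simpl; [lra|reflexivity]|exact Hyb].
Qed.

Lemma V_const (A : zmodType) (gam : R -> G A -> Prop) u (b : A) d eta :
  (forall t, 0 <= t <= 1 -> closed_subgroup (gam t)) ->
  chabauty_continuous_on01 gam -> 0 <= u <= 1 ->
  1 <= INR d -> (forall a : A, GRing.natmul a d = GRing.zero) -> 0 < eta ->
  Vp d eta (gam u) ->
  exists del, 0 < del /\ forall s, 0 <= s <= 1 -> Rabs (s - u) < del ->
    (gam s (0, b) <-> gam u (0, b)).
Proof.
intros Hsub Hc Hu Hd Htor Heta HV.
assert (Hle : eta <= 2 * INR d * eta) by nra.
destruct (classic (gam u (0, b))) as [Hx|Hn].
- destruct (Hc u Hu (sseg eta (2 * INR d * eta) GRing.zero) [:: oseg (- eta) eta b]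
    (@sseg_compact A _ _ GRing.zero Hle) (forall_open1 (@oseg_open A (- eta) eta b))) as [del [Hdel Hs]].
  { apply basic_single. split.
    - intros [x a] [Hx' Ha] Hg. simpl in Hx', Ha. subst a. exact (HV x Hx' Hg).
    - exists (0, b). split; [split; simpl; [lra|reflexivity]|exact Hx]. }
  exists del. split; [exact Hdel|]. intros s Hs1 Hs2. split; intros _; [exact Hx|].
  destruct (proj1 (basic_single _ _ _) (Hs s Hs1 Hs2)) as [HK [[x a] [[Hx' Ha] Hg]]].
  simpl in Hx', Ha. subst a.
  assert (HVs : Vp d eta (gam s)).
  { intros z Hz Hg'. apply (HK (z, GRing.zero)); [split; simpl; [exact Hz|reflexivity]|exact Hg']. }
  assert (x = 0).
  { apply (zero_fiber (Hsub s Hs1) Hd Htor Heta HVs Hg). apply Rabs_le_iff. lra. }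
  subst x. exact Hg.
- destruct (Hc u Hu (sseg (- eta) eta b) [::] (@sseg_compact A (- eta) eta b ltac:(lra))
    (List.Forall_nil _)) as [del [Hdel Hs]].
  { split; [|constructor]. intros [x a] [Hx Ha] Hg. simpl in Hx, Ha. subst a.
    assert (x = 0).
    { apply (zero_fiber (Hsub u Hu) Hd Htor Heta HV Hg). apply Rabs_le_iff. lra. }
    subst x. exact (Hn Hg). }
  exists del. split; [exact Hdel|]. intros s Hs1 Hs2.
  destruct (Hs s Hs1 Hs2) as [HK _]. split; [|intro h; contradiction].
  intro h. exfalso. apply (HK (0, b)); [split; simpl; [lra|reflexivity]|exact h].
Qed.

Theorem proposition7p6 (A : zmodType) :
  infinite_group A -> uniform_torsion A -> ~ chabauty_path_connected A.
Proof.
intros Hinf [d [Hd1 Htor]] Hpc.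
assert (Hd : 1 <= INR d).
{ move/leP: Hd1 => Hd1. apply le_INR in Hd1. simpl in Hd1. exact Hd1. }
set (F0 := fun g : G A => snd g = GRing.zero).
set (F1 := fun _ : G A => True).
assert (HF0 : closed_subgroup F0).
{ split.
  - reflexivity.
  - intros g h Hg Hh. unfold F0, gadd in *. simpl. rewrite Hg Hh GRing.addr0. reflexivity.
  - intros g Hg. unfold F0, gopp in *. simpl. rewrite Hg GRing.oppr0. reflexivity.
  - intros x a Ha. exists 1. split; [lra|]. intros y _. exact Ha. }
assert (HF1 : closed_subgroup F1).
{ split; try (intros; exact I). intros x a Ha. exfalso. apply Ha. exact I. }
destruct (Hpc F0 F1 HF0 HF1) as [gam [Hsub [H0 [H1 Hc]]]].
set (eta := / (4 * INR d)).
assert (Heta : 0 < eta) by (unfold eta; apply Rinv_0_lt_compat; lra).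
assert (Heta2 : 2 * INR d * eta = / 2) by (unfold eta; field; lra).
assert (Hle : eta <= 2 * INR d * eta) by nra.
assert (Hloc : forall t, 0 <= t <= 1 -> exists del, 0 < del /\
   forall s, 0 <= s <= 1 -> Rabs (s - t) < del ->
   (fin (Bset (gam s)) <-> fin (Bset (gam t)))).
{ intros t Ht. destruct (classic (Wp (gam t))) as [HW|HW].
  - destruct (W_nbhd Hc Ht HW) as [del [Hdel Hdels]].
    exists del. split; [exact Hdel|]. intros s Hs Hst.
    assert (Heq : forall b, Bset (gam s) b <-> Bset (gam t) b).
    { intro b. apply (const_on_ball (P := fun u => Bset (gam u) b) Hdel Ht); [|exact Hs|exact Hst].
      intros u Hu Hut. apply (W_const b Hsub Hc Hu). exact (Hdels u Hu Hut). }
    split; intros [l Hl]; exists l; intros b Hb; apply Hl; apply Heq; exact Hb.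
  - assert (HV : Vp d eta (gam t)).
    { intros x Hx Hg. apply HW. exists x. split; [lra|exact Hg]. }
    destruct (V_nbhd Hc Ht Hle HV) as [del [Hdel Hdels]].
    exists del. split; [exact Hdel|]. intros s Hs Hst.
    assert (Heq : forall b, gam s (0, b) <-> gam t (0, b)).
    { intro b. apply (const_on_ball (P := fun u => gam u (0, b)) Hdel Ht); [|exact Hs|exact Hst].
      intros u Hu Hut. apply (V_const b Hsub Hc Hu Hd Htor Heta). exact (Hdels u Hu Hut). }
    assert (HVs := Hdels s Hs Hst).
    split; intros [l Hl].
    + apply (fin_B_of_B0 (Hsub t Ht) Hd Htor Heta).
      * intros x b Hg Hx. exact (zero_fiber (Hsub t Ht) Hd Htor Heta HV Hg Hx).
      * exists l. intros b Hb. apply Hl. exists 0. apply Heq. exact Hb.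
    + apply (fin_B_of_B0 (Hsub s Hs) Hd Htor Heta).
      * intros x b Hg Hx. exact (zero_fiber (Hsub s Hs) Hd Htor Heta HVs Hg Hx).
      * exists l. intros b Hb. apply Hl. exists 0. apply Heq. exact Hb. }
assert (Hiff : fin (Bset (gam 0)) <-> fin (Bset (gam 1))).
{ apply (connected_lemma (P := fun t => fin (Bset (gam t))) (Rle_0_1)).
  intros u Hu. destruct (Hloc u Hu) as [del [Hdel Hs]]. exists del. split; [exact Hdel|].
  intros s Hs1 Hs2. exact (Hs s Hs1 Hs2). }
assert (HQ0 : fin (Bset (gam 0))).
{ exists [:: GRing.zero]. intros b [x Hx]. apply H0 in Hx. unfold F0 in Hx. simpl in Hx.
  rewrite Hx. by rewrite inE. }
destruct (proj1 Hiff HQ0) as [l Hl].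
destruct (Hinf l) as [a Ha].
assert (a \in l). { apply Hl. exists 0. apply H1. exact I. }
rewrite H in Ha. discriminate.
Qed.
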